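(* Let $\mathfrak g$ be a Lie algebra with basis and structure constants $\chi^\gamma_{\alpha\beta}$, and for $n\ge3$ let $A^{(1)},\dots,A^{(n-2)},B:=A^{(n-1)},C:=A^{(n)}$ be $\mathfrak g$-valued functions depending on a small parameter $\varepsilon$ and satisfying the Lie–Poisson brackets $\{A^{(i)}_\alpha,A^{(j)}_\beta\}=-\delta_{ij}\sum_\gamma\chi^\gamma_{\alpha\beta}A^{(i)}_\gamma$. Assume they admit Laurent expansions in $\varepsilon$ with $\varepsilon$-independent coefficients, $$A^{(i)}=\tilde A^{(i)}+O(\varepsilon)\ (i\le n-2),\qquad C=\tfrac1\varepsilon A^{(n-1)}_1+C_0+O(\varepsilon),\qquad B=-\tfrac1\varepsilon A^{(n-1)}_1+B_0+O(\varepsilon),$$ and that the Poisson brackets can be expanded termwise in $\varepsilon$. Put $A^{(n-1)}_0=B_0+C_0$. Then for $i,j=1,\dots,n-2$: $$\{\tilde A^{(i)}_\alpha,\tilde A^{(j)}_\beta\}=-\delta_{ij}\sum_\gamma\chi^\gamma_{\alpha\beta}\tilde A^{(i)}_\gamma,\qquad \{\tilde A^{(i)}_\alpha,A^{(n-1)}_{0,\beta}\}=\{\tilde A^{(i)}_\alpha,A^{(n-1)}_{1,\beta}\}=0,$$ $$\{A^{(n-1)}_{1,\alpha},A^{(n-1)}_{1,\beta}\}=0,\quad \{A^{(n-1)}_{1,\alpha},A^{(n-1)}_{0,\beta}\}=-\sum_\gamma\chi^\gamma_{\alpha\beta}A^{(n-1)}_{1,\gamma},\quad \{A^{(n-1)}_{0,\alpha},A^{(n-1)}_{0,\beta}\}=-\sum_\gamma\chi^\gamma_{\alpha\beta}A^{(n-1)}_{0,\gamma}.$$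 That is, the limit $\varepsilon\to0$ (1+1 confluence $u_n=u_{n-1}+\varepsilon t_1$) gives a Poisson morphism from the product of $n$ coadjoint orbits of $\mathfrak g$ to the product of $n-2$ coadjoint orbits of $\mathfrak g$ and one coadjoint orbit of the Takiff algebra $\mathfrak g[z]/z^2\mathfrak g[z]$.
   Context: Lower indices $\alpha,\beta,\gamma$ denote components in the chosen basis of $\mathfrak g$; e.g. $A^{(n-1)}_{1,\alpha}$ is the $\alpha$-component of $A^{(n-1)}_1$. In the confluence the connection $\sum_i\frac{A^{(i)}}{\lambda-u_i}$ with $u_n=u_{n-1}+\varepsilon t_1$ tends to $\sum_{i\le n-2}\frac{\tilde A^{(i)}}{\lambda-u_i}+\frac{t_1A^{(n-1)}_1}{(\lambda-u_{n-1})^2}+\frac{A^{(n-1)}_0}{\lambda-u_{n-1}}$. *)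

(* Defs.v *)
From HB Require Import structures.
From mathcomp Require Import all_boot all_order all_algebra.
Set Implicit Arguments. Unset Strict Implicit. Unset Printing Implicit Defensive.
Import Order.TTheory GRing.Theory Num.Theory.
Local Open Scope ring_scope.

(* A Poisson bracket on a commutative K-algebra P (the algebra of functions on
   phase space): bilinear (right-linearity follows from antisymmetry),
   antisymmetric, Jacobi, Leibniz. *)
Definition poisson_bracket (K : fieldType) (P : comAlgType K)
    (br : P -> P -> P) : Prop :=
  [/\ forall (c : K) (a b e : P), br (c *: a + b) e = c *: br a e + br b e,
      forall a b : P, br a b = - br b a,
      forall a b e : P, br a (br b e) + br b (br e a) + br e (br a b) = 0
    & forall a b e : P, br a (b * e) = br a b * e + b * br a e].

(* Structure constants chi g a b = chi^g_{ab} of a Lie algebra of dimension d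
   with respect to a basis: [x_a, x_b] = sum_g chi^g_{ab} x_g. *)
Definition lie_structure_constants (K : fieldType) (d : nat)
    (chi : 'I_d -> 'I_d -> 'I_d -> K) : Prop :=
  (forall g a b, chi g a b = - chi g b a) /\
  (forall a b c e,
     \sum_(h < d) (chi h a b * chi e h c + chi h b c * chi e h a
                   + chi h c a * chi e h b) = 0).

(* A formal Laurent series in eps with coefficients in P is represented by its
   coefficient function  f : int -> P,  f k = coefficient of eps^k.
   If a and b both vanish below eps^m, the termwise expansion of the bracket
   {sum_p a_p eps^p, sum_q b_q eps^q} = sum_k (sum_(p+q=k) {a_p,b_q}) eps^k
   has k-th coefficient  laurent_br m br a b k  (a finite sum over
   p = m, ..., k - m; it is 0 when k < 2m). *)
Definition laurent_br (K : fieldType) (P : comAlgType K) (br : P -> P -> P)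
    (m : int) (a b : int -> P) (k : int) : P :=
  \sum_(i < (absz (k - 2 * m)%R).+1 | (2 * m <= k)%R)
     br (a (m + i%:Z)) (b (k - m - i%:Z)).

(* Main.v *)
Require Import Defs.
From HB Require Import structures.
From mathcomp Require Import all_boot all_order all_algebra.
From mathcomp Require Import zify ring.
Import Order.TTheory GRing.Theory Num.Theory.
Local Open Scope ring_scope.

Lemma lbm2 (K : fieldType) (P : comAlgType K) (br : P -> P -> P) a b :
  laurent_br br (-1) a b (-2) = br (a (-1)) (b (-1)).
Proof. by rewrite /laurent_br big_mkcond /= big_ord_recr big_ord0 /= add0r. Qed.
Lemma lbm1 (K : fieldType) (P : comAlgType K) (br : P -> P -> P) a b :
  laurent_br br (-1) a b (-1) = br (a (-1)) (b 0) + br (a 0) (b (-1)).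
Proof. by rewrite /laurent_br big_mkcond /= !big_ord_recr big_ord0 /= add0r. Qed.
Lemma lb0 (K : fieldType) (P : comAlgType K) (br : P -> P -> P) a b :
  laurent_br br (-1) a b 0 = br (a (-1)) (b 1) + br (a 0) (b 0) + br (a 1) (b (-1)).
Proof. by rewrite /laurent_br big_mkcond /= !big_ord_recr big_ord0 /= add0r. Qed.

Set Implicit Arguments.
Section Br.
Variables (K : fieldType) (P : comAlgType K) (br : P -> P -> P).
Hypothesis hb : poisson_bracket br.
Lemma br0l x : br 0 x = 0.
Proof.
case: hb => L _ _ _; have h := L 1 0 0 x; rewrite !scale1r addr0 in h.
by apply: (addrI (br 0 x)); rewrite addr0 -h.
Qed.
Lemma br0r x : br x 0 = 0.
Proof. by case: hb => _ S _ _; rewrite S br0l oppr0. Qed.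
Lemma brDl x y z : br (x + y) z = br x z + br y z.
Proof. by case: hb => L _ _ _; have := L 1 x y z; rewrite !scale1r. Qed.
Lemma brDr x y z : br z (x + y) = br z x + br z y.
Proof. by case: hb => _ S _ _; rewrite S brDl opprD -!S. Qed.
Lemma brNl x y : br (- x) y = - br x y.
Proof. case: hb => L _ _ _; have h := L (-1) x 0 y.
by rewrite addr0 br0l addr0 !scaleN1r in h. Qed.
Lemma brNr x y : br y (- x) = - br y x.
Proof. by case: hb => _ S _ _; rewrite S brNl -S. Qed.
End Br.
Unset Implicit Arguments.

Theorem proposition4p3 (K : fieldType) (P : comAlgType K) (br : P -> P -> P)
  (d : nat) (chi : 'I_d -> 'I_d -> 'I_d -> K) (n : nat)
  (A : 'I_n -> 'I_d -> int -> P) (iB iC : 'I_n)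
  (At : 'I_n -> 'I_d -> P) (A1 B0 C0 : 'I_d -> P) :
  poisson_bracket br ->
  lie_structure_constants chi ->
  (3 <= n)%N ->
  val iB = (n - 2)%N -> val iC = (n - 1)%N ->
  (* all expansions start at eps^(-1) at worst *)
  (forall i a k, k < -1 -> A i a k = 0) ->
  (* A^(i) = tilde A^(i) + O(eps) for i <= n-2 *)
  (forall i a, (val i < n - 2)%N -> A i a (-1) = 0 /\ A i a 0 = At i a) ->
  (* C = A1/eps + C0 + O(eps),  B = -A1/eps + B0 + O(eps) *)
  (forall a, A iC a (-1) = A1 a /\ A iC a 0 = C0 a) ->
  (forall a, A iB a (-1) = - A1 a /\ A iB a 0 = B0 a) ->
  (* Lie-Poisson brackets, expanded termwise in eps *)
  (forall i j a b k,
     laurent_br br (-1) (A i a) (A j b) k =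
     if i == j then - \sum_(g < d) chi g a b *: A i g k else 0) ->
  let A0 := fun a => B0 a + C0 a in
  [/\ forall (i j : 'I_n) a b, (val i < n - 2)%N -> (val j < n - 2)%N ->
        br (At i a) (At j b) =
        if i == j then - \sum_(g < d) chi g a b *: At i g else 0,
      forall (i : 'I_n) a b, (val i < n - 2)%N -> br (At i a) (A0 b) = 0,
      forall (i : 'I_n) a b, (val i < n - 2)%N -> br (At i a) (A1 b) = 0
    & [/\ forall a b, br (A1 a) (A1 b) = 0,
      forall a b, br (A1 a) (A0 b) = - \sum_(g < d) chi g a b *: A1 g
    & forall a b, br (A0 a) (A0 b) = - \sum_(g < d) chi g a b *: A0 g]].
Proof.
move=> hb _ n3 HB HC Hlow Hi HCc HBc H A0.
have neBC : iC != iB by apply/eqP => e; move: HC; rewrite e HB; lia.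
have neiB i : (val i < n - 2)%N -> i != iB by move=> h; apply/eqP => e; move: h; rewrite e HB ltnn.
have neiC i : (val i < n - 2)%N -> i != iC by move=> h; apply/eqP => e; move: h; rewrite e HC; lia.
have sumD (F G : 'I_d -> P) a b : \sum_(g < d) chi g a b *: (F g + G g) =
   \sum_(g < d) chi g a b *: F g + \sum_(g < d) chi g a b *: G g.
  by rewrite -big_split /=; apply: eq_bigr => g _; rewrite scalerDr.
split.
- move=> i j a b hi hj; have := H i j a b 0.
  rewrite lb0 (proj1 (Hi i a hi)) (proj1 (Hi j b hj)) (br0l hb) (br0r hb) add0r addr0.
  rewrite (proj2 (Hi i a hi)) (proj2 (Hi j b hj)) => ->.
  by case: eqP => // ->; congr (- _); apply: eq_bigr => g _; rewrite (proj2 (Hi j g hj)).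
- move=> i a b hi; rewrite /A0 (brDr hb).
  have := H i iB a b 0; have := H i iC a b 0.
  rewrite !lb0 (negbTE (neiB i hi)) (negbTE (neiC i hi)) (proj1 (Hi i a hi)) !(br0l hb).
  rewrite (proj2 (Hi i a hi)) (proj2 (HBc b)) (proj2 (HCc b)) !add0r !(proj1 (HBc b)) !(proj1 (HCc b)).
  move=> e1 e2; rewrite (brNr hb) in e2; move/eqP: e1; rewrite addr_eq0 => /eqP ->.
  by move/eqP: e2; rewrite subr_eq0 => /eqP ->; rewrite subrr.
- move=> i a b hi; have := H i iC a b (-1).
  rewrite lbm1 (negbTE (neiC i hi)) (proj1 (Hi i a hi)) (br0l hb) add0r.
  by rewrite (proj2 (Hi i a hi)) (proj1 (HCc b)).
split.
- move=> a b; have := H iC iC a b (-2); rewrite lbm2 !(proj1 (HCc _)) eqxx => ->.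
  by rewrite big1 ?oppr0 // => g _; rewrite Hlow ?scaler0.
- move=> a b.
  have := H iC iC a b (-1); have := H iC iB a b (-1); have := H iB iB a b (-1); have := H iB iC a b (-1).
  rewrite !lbm1 !eqxx (negbTE neBC) eq_sym (negbTE neBC).
  rewrite !(proj1 (HCc _)) !(proj1 (HBc _)) !(proj2 (HCc _)) !(proj2 (HBc _)) !(brNl hb) !(brNr hb).
  rewrite /A0 (brDr hb).
  have -> : \sum_(g < d) chi g a b *: A iB g (-1) = - \sum_(g < d) chi g a b *: A1 g.
    by rewrite -sumrN; apply: eq_bigr => g _; rewrite (proj1 (HBc g)) scalerN.
  have -> : \sum_(g < d) chi g a b *: A iC g (-1) = \sum_(g < d) chi g a b *: A1 g.
    by apply: eq_bigr => g _; rewrite (proj1 (HCc g)).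
  move=> e1 e2 e3 e4; rewrite -e4.
  move/eqP: e1; rewrite addrC subr_eq0 => /eqP <-.
  by move/eqP: e3; rewrite subr_eq0 => /eqP ->; rewrite addrC.
- move=> a b.
  have := H iC iC a b 0; have := H iC iB a b 0; have := H iB iB a b 0; have := H iB iC a b 0.
  rewrite !lb0 !eqxx (negbTE neBC) eq_sym (negbTE neBC).
  rewrite !(proj1 (HCc _)) !(proj1 (HBc _)) !(proj2 (HCc _)) !(proj2 (HBc _)) !(brNl hb) !(brNr hb).
  have -> : \sum_(g < d) chi g a b *: A iB g 0 = \sum_(g < d) chi g a b *: B0 g.
    by apply: eq_bigr => g _; rewrite (proj2 (HBc g)).
  have -> : \sum_(g < d) chi g a b *: A iC g 0 = \sum_(g < d) chi g a b *: C0 g.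
    by apply: eq_bigr => g _; rewrite (proj2 (HCc g)).
  rewrite /A0 sumD !(brDl hb) !(brDr hb).
  move=> e1 e2 e3 e4.
  rewrite opprD -e2 -e4 -[br (B0 a) (C0 b)]subr0 -e1 -[br (C0 a) (B0 b)]subr0 -e3.
  ring.
Qed.
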